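(* Let $\mathcal{R}$ be a multiset rewriting (MSR) system over a fact signature satisfying the protocol format assumptions described in the context, with $n$ protocol roles, and let $\mathcal{R}_{\mathsf{intf}}$ be its interface model (constructed as in the context). Then every filtered trace of $\mathcal{R}_{\mathsf{intf}}$ is a filtered trace of $\mathcal{R}$, i.e. $\mathrm{Tr}'(\mathcal{R}_{\mathsf{intf}}) \subseteq \mathrm{Tr}'(\mathcal{R})$.
   Context: Terms and messages. Fix a finite signature $\Sigma$ of function symbols, a set of names $\mathcal{N} = \mathit{fresh} \cup \mathit{pub}$ (fresh names and countably many public names) and a set of variables $\mathcal{V}$; terms are $\mathcal{T} = \mathcal{T}_\Sigma(\mathcal{N}\cup\mathcal{V})$, messages $\mathcal{M}$ are ground terms. An equational theory $\mathsf{E}$ induces the equality $=_\mathsf{E}$ (the least congruence containing $\mathsf{E}$, closed under substitution). Facts and MSR. A fact signature $\Sigma_{\mathsf{facts}} = \Sigma_{\mathsf{lin}} \uplus \Sigma_{\mathsf{per}}$ of fact symbols is partitioned into linear and persistent symbols; facts are $F(t_1,\dots,t_k)$ with $F$ of arity $k$ and $t_j \in \mathcal{T}$, partitioned accordingly into $\mathcal{F}_{\mathsf{lin}}\uplus\mathcal{F}_{\mathsf{per}}$. An MSR rule $l \xrightarrow{a} r$ has multisets of facts $l,a,r$; an MSR system is a finite set of rules. Its semantics is an LTS whose states are multisets of ground facts, with initial state the empty multiset, and with transition $S \xrightarrow{a'} (S \setminus^{\#} (l' \cap^{\#} \mathcal{F}_{\mathsf{lin}})) \cup^{\#} r'$ whenever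 $l \xrightarrow{a} r$ is a rule, $\theta$ is a ground instantiation of its variables, $l' \xrightarrow{a'} r' =_\mathsf{E} (l\xrightarrow{a} r)\theta$, $l' \cap^{\#} \mathcal{F}_{\mathsf{lin}} \subseteq^{\#} S$ and $\mathrm{set}(l') \cap \mathcal{F}_{\mathsf{per}} \subseteq \mathrm{set}(S)$ (here $\cup^\#,\setminus^\#,\subseteq^\#,\cap^\#$ are multiset operations, and $M\cap^\# X$ keeps the elements of $M$ lying in the set $X$ with their multiplicities). $\mathrm{Tr}(\mathcal{R})$ is the set of label sequences $\langle a_1,\dots,a_m\rangle$ of finite executions from the empty state, and $\mathrm{Tr}'(\mathcal{R})$ is obtained from $\mathrm{Tr}(\mathcal{R})$ by deleting all empty labels from each sequence. Reserved symbols: $\mathsf{K}\in\Sigma_{\mathsf{per}}$ (attacker knowledge) and $\mathsf{Fr},\mathsf{in},\mathsf{out}\in\Sigma_{\mathsf{lin}}$ (freshness, input, output). Format assumptions. The fact signature has the form $\Sigma_{\mathsf{facts}} = \Sigma_{\mathsf{act}} \uplus \Sigma_{\mathsf{env}} \uplus \biguplus_{1\le i\le n} \Sigma^i_{\mathsf{state}}$ (action, environment and role-$i$ state fact symbols). $\Sigma_{\mathsf{env}}$ contains disjoint subsets $\Sigma_{\mathsf{in}}$ and $\Sigma_{\mathsf{out}}$ with $\mathsf{Fr},\mathsf{in}\in\Sigma_{\mathsf{in}}$, $\mathsf{out}\in\Sigma_{\mathsf{out}}$, $\mathsf{K}\in\Sigma_{\mathsf{env}}\setminus(\Sigma_{\mathsf{in}}\cup\Sigma_{\mathsf{out}})$,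 and for each role $i$ a setup symbol $\mathsf{Setup}_i\in\Sigma_{\mathsf{in}}$. The rules are $\mathcal{R} = \mathcal{R}_{\mathsf{env}} \uplus \biguplus_{1\le i\le n}\mathcal{R}_i$ (pairwise disjoint), where $\mathcal{R}_{\mathsf{env}}$ contains the attacker's message deduction rules and the freshness rule $[] \xrightarrow{[\mathsf{Fr}(x)]} [\mathsf{Fr}(x)]$ for $x$ of fresh type. All rule labels use only symbols from $\Sigma_{\mathsf{act}}$. Every rule of $\mathcal{R}_{\mathsf{env}}$ uses only symbols from $\Sigma_{\mathsf{env}}$ in its premises and conclusions; a rule producing a $\mathsf{Setup}_i$ fact lies in $\mathcal{R}_{\mathsf{env}}$, produces no other fact and has empty label (these are the role setup rules). Every rule $l\xrightarrow{a} r\in\mathcal{R}_i$ satisfies: the symbols of $l$ lie in $\Sigma^i_{\mathsf{state}}\cup\Sigma_{\mathsf{in}}$, those of $r$ lie in $\Sigma^i_{\mathsf{state}}\cup\Sigma_{\mathsf{out}}$, $r$ contains at least one state fact, and there is $k_i\ge 1$ such that the first $k_i$ arguments of all state facts and $\mathsf{Setup}_i$ facts in the rule coincide, the first of them being a thread identifier $\mathit{rid}$ of fresh type. Interface model. Let $\Sigma_{\mathsf{in}}^- = \Sigma_{\mathsf{in}}\setminus\{\mathsf{Setup}_1,\dots,\mathsf{Setup}_n\}$. For each $F\in\Sigma^-_{\mathsf{in}}\cup\Sigma_{\mathsf{out}}$ and each role $i$ add a new ''buffer'' symbol $F_i$ (with one more argument, of the same linearity as $F$). $\mathcal{R}'_i$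 is obtained from $\mathcal{R}_i$ by replacing in every rule each fact $F(t_1,\dots,t_k)$ with $F\in\Sigma^-_{\mathsf{in}}\cup\Sigma_{\mathsf{out}}$ by $F_i(\mathit{rid},t_1,\dots,t_k)$, where $\mathit{rid}$ is the rule's thread identifier. $\mathcal{R}_{\mathsf{io}}$ consists, for each role $i$, of the rules $[F(x_1,\dots,x_k)]\xrightarrow{[]}[F_i(\mathit{rid},x_1,\dots,x_k)]$ for $F\in\Sigma^-_{\mathsf{in}}$ and $[G_i(\mathit{rid},x_1,\dots,x_k)]\xrightarrow{[]}[G(x_1,\dots,x_k)]$ for $G\in\Sigma_{\mathsf{out}}$, together with all role setup rules, which are removed from $\mathcal{R}_{\mathsf{env}}$; the remaining environment rules form $\mathcal{R}^-_{\mathsf{env}}$. Finally $\mathcal{R}_{\mathsf{intf}} = \mathcal{R}^-_{\mathsf{env}}\uplus\mathcal{R}_{\mathsf{io}}\uplus\biguplus_i \mathcal{R}'_i$. *)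

(* Defs.v *)
(* plain Rocq with lists; multisets are lists up to Permutation. *)
From Stdlib Require Import List Permutation Arith.
Import ListNotations.
Set Implicit Arguments.

Inductive sort := SMsg | SFresh | SPub.
Record var := Var { vsort : sort; vidx : nat }.

Inductive name := NFresh (k : nat) | NPub (k : nat).

Record funsig := {
  fsym : Type;
  farity : fsym -> nat;
  fsym_finite : exists l : list fsym, forall f, List.In f l }.

Inductive term (Fn : Type) : Type :=
| TVar (v : var)
| TName (a : name)
| TApp (f : Fn) (args : list (term Fn)).
Arguments TVar {Fn} v.
Arguments TName {Fn} a.
Arguments TApp {Fn} f args.

Fixpoint wf_term (Sg : funsig) (t : term (fsym Sg)) : Prop :=
  match t with
  | TApp f args =>
      length args = farity Sg f /\
      (fix go (l : list (term (fsym Sg))) : Prop :=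
         match l with [] => True | u :: l' => @wf_term Sg u /\ go l' end) args
  | _ => True
  end.

Arguments wf_term {Sg} t.

Fixpoint ground (Fn : Type) (t : term Fn) : Prop :=
  match t with
  | TVar _ => False
  | TName _ => True
  | TApp _ args =>
      (fix go (l : list (term Fn)) : Prop :=
         match l with [] => True | u :: l' => @ground Fn u /\ go l' end) args
  end.

Fixpoint subst (Fn : Type) (th : var -> term Fn) (t : term Fn) : term Fn :=
  match t with
  | TVar v => th v
  | TName a => TName a
  | TApp f args => TApp f (map (@subst Fn th) args)
  end.

(* a term has (may instantiate) a variable of the given sort *)
Definition has_sort (Fn : Type) (t : term Fn) (s : sort) : Prop :=
  match s with
  | SMsg => True
  | SFresh => (exists k, t = TName (NFresh k)) \/ (exists w, vsort w = SFresh /\ t = TVar w)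
  | SPub => (exists k, t = TName (NPub k)) \/ (exists w, vsort w = SPub /\ t = TVar w)
  end.

Definition sorted_subst (Fn : Type) (th : var -> term Fn) : Prop :=
  forall v, has_sort (th v) (vsort v).

Inductive eqE (Fn : Type) (E : term Fn -> term Fn -> Prop) : term Fn -> term Fn -> Prop :=
| eqE_refl t : eqE E t t
| eqE_sym t u : eqE E t u -> eqE E u t
| eqE_trans t u w : eqE E t u -> eqE E u w -> eqE E t w
| eqE_ax l r th : E l r -> sorted_subst th -> eqE E (subst th l) (subst th r)
| eqE_cong f pre t t' post :
    eqE E t t' -> eqE E (TApp f (pre ++ t :: post)) (TApp f (pre ++ t' :: post)).

Definition fact (S Fn : Type) := (S * list (term Fn))%type.

Record rule (S Fn : Type) := Rule {
  prem : list (fact S Fn);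
  lab : list (fact S Fn);
  concl : list (fact S Fn) }.
Arguments Rule {S Fn} prem lab concl.

Definition subst_fact (S Fn : Type) (th : var -> term Fn) (f : fact S Fn) : fact S Fn :=
  (fst f, map (subst th) (snd f)).

Definition fact_eqE (S Fn : Type) (E : term Fn -> term Fn -> Prop) (f g : fact S Fn) : Prop :=
  fst f = fst g /\ Forall2 (eqE E) (snd f) (snd g).

Definition ground_inst (Sg : funsig) (th : var -> term (fsym Sg)) : Prop :=
  forall v, ground (th v) /\ wf_term (th v) /\ has_sort (th v) (vsort v).

Arguments ground_inst {Sg} th.

Definition msg_fact (Sg : funsig) (S : Type) (ar : S -> nat) (f : fact S (fsym Sg)) : Prop :=
  length (snd f) = ar (fst f) /\ Forall (fun t => ground t /\ wf_term t) (snd f).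

Arguments msg_fact {Sg S} ar f.

(* One transition  St --a'--> St'  of the LTS of the MSR system R
   (R given as a set of rules; lin F = true iff F is linear). *)
Definition step (Sg : funsig) (S : Type) (ar : S -> nat) (lin : S -> bool)
  (E : term (fsym Sg) -> term (fsym Sg) -> Prop) (R : rule S (fsym Sg) -> Prop)
  (St : list (fact S (fsym Sg))) (a' : list (fact S (fsym Sg)))
  (St' : list (fact S (fsym Sg))) : Prop :=
  exists (ru : rule S (fsym Sg)) (th : var -> term (fsym Sg)) (l' r' : list (fact S (fsym Sg))),
    R ru /\ ground_inst th /\
    Forall2 (fact_eqE E) l' (map (subst_fact th) (prem ru)) /\
    Forall2 (fact_eqE E) a' (map (subst_fact th) (lab ru)) /\
    Forall2 (fact_eqE E) r' (map (subst_fact th) (concl ru)) /\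
    Forall (msg_fact ar) (l' ++ a' ++ r') /\
    (forall f, List.In f l' -> lin (fst f) = false -> List.In f St) /\
    exists rest,
      Permutation St (filter (fun f => lin (fst f)) l' ++ rest) /\
      Permutation St' (rest ++ r').

Arguments step {Sg S} ar lin E R St a' St'.

Inductive reach (Sg : funsig) (S : Type) (ar : S -> nat) (lin : S -> bool)
  (E : term (fsym Sg) -> term (fsym Sg) -> Prop) (R : rule S (fsym Sg) -> Prop)
  : list (list (fact S (fsym Sg))) -> list (fact S (fsym Sg)) -> Prop :=
| reach_nil : @reach Sg S ar lin E R [] []
| reach_step tr St a St' :
    @reach Sg S ar lin E R tr St -> @step Sg S ar lin E R St a St' ->
    @reach Sg S ar lin E R (tr ++ [a]) St'.
Arguments reach {Sg S} ar lin E R _ _.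

Definition Tr (Sg : funsig) (S : Type) (ar : S -> nat) (lin : S -> bool)
  (E : term (fsym Sg) -> term (fsym Sg) -> Prop) (R : rule S (fsym Sg) -> Prop)
  (tr : list (list (fact S (fsym Sg)))) : Prop :=
  exists St, reach ar lin E R tr St.

Definition nonempty (A : Type) (l : list A) : bool :=
  match l with [] => false | _ => true end.

Arguments Tr {Sg S} ar lin E R tr.

Definition Tr' (Sg : funsig) (S : Type) (ar : S -> nat) (lin : S -> bool)
  (E : term (fsym Sg) -> term (fsym Sg) -> Prop) (R : rule S (fsym Sg) -> Prop)
  (t : list (list (fact S (fsym Sg)))) : Prop :=
  exists tr, Tr ar lin E R tr /\ t = filter (@nonempty _) tr.

Arguments Tr' {Sg S} ar lin E R t.

Inductive fclass := CAct | CEnv | CState (i : nat).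

Record factsig := {
  symb : Type;
  sarity : symb -> nat;
  slin : symb -> bool;            (* true = linear, false = persistent *)
  sclass : symb -> fclass;
  isIn : symb -> Prop;
  isOut : symb -> Prop;
  KS : symb; FrS : symb; InS : symb; OutS : symb;
  SetupS : nat -> symb }.

Section Protocol.
Variables (Sg : funsig) (FS : factsig) (n : nat).
Notation Fn := (fsym Sg).
Notation S := (symb FS).
Notation rl := (rule S Fn).

Definition role (i : nat) : Prop := 1 <= i <= n.

Definition R_orig (Renv : list rl) (Rrole : nat -> list rl) (r : rl) : Prop :=
  List.In r Renv \/ exists i, role i /\ List.In r (Rrole i).

Definition wf_rule_fact (f : fact S Fn) : Prop :=
  length (snd f) = sarity FS (fst f) /\ Forall (@wf_term Sg) (snd f).

Definition fresh_rule (r : rl) : Prop :=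
  exists x, vsort x = SFresh /\
    r = Rule [] [(FrS FS, [TVar x])] [(FrS FS, [TVar x])].

Definition distinct_vars (xs : list var) : Prop := NoDup xs.

(* The attacker's message deduction rules (up to choice of variables and
   of their, action-only, labels). *)
Definition md_rules_in (Renv : list rl) : Prop :=
  (exists x a, vsort x = SMsg /\
     List.In (Rule [(OutS FS, [TVar x])] a [(KS FS, [TVar x])]) Renv) /\
  (exists x a, vsort x = SMsg /\
     List.In (Rule [(KS FS, [TVar x])] a [(InS FS, [TVar x])]) Renv) /\
  (exists x a, vsort x = SPub /\
     List.In (Rule [] a [(KS FS, [TVar x])]) Renv) /\
  (exists x a, vsort x = SFresh /\
     List.In (Rule [(FrS FS, [TVar x])] a [(KS FS, [TVar x])]) Renv) /\
  (forall f : Fn, exists xs a,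
     length xs = farity Sg f /\ NoDup xs /\ Forall (fun x => vsort x = SMsg) xs /\
     List.In (Rule (map (fun x => (KS FS, [TVar x])) xs) a
                   [(KS FS, [TApp f (map TVar xs)])]) Renv).

Definition is_setup_sym (F : S) : Prop := exists j, role j /\ F = SetupS FS j.

Definition format_assumptions (Renv : list rl) (Rrole : nat -> list rl) : Prop :=
  (forall F i, sclass FS F = CState i -> role i) /\
  (forall F, isIn FS F -> sclass FS F = CEnv) /\
  (forall F, isOut FS F -> sclass FS F = CEnv) /\
  (forall F, ~ (isIn FS F /\ isOut FS F)) /\
  isIn FS (FrS FS) /\ isIn FS (InS FS) /\ isOut FS (OutS FS) /\
  sclass FS (KS FS) = CEnv /\ ~ isIn FS (KS FS) /\ ~ isOut FS (KS FS) /\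
  slin FS (KS FS) = false /\ slin FS (FrS FS) = true /\
  slin FS (InS FS) = true /\ slin FS (OutS FS) = true /\
  (forall i, role i -> isIn FS (SetupS FS i)) /\
  (forall i j, role i -> role j -> SetupS FS i = SetupS FS j -> i = j) /\
  sarity FS (KS FS) = 1 /\ sarity FS (FrS FS) = 1 /\
  sarity FS (InS FS) = 1 /\ sarity FS (OutS FS) = 1 /\
  (forall i r, role i -> ~ (List.In r Renv /\ List.In r (Rrole i))) /\
  (forall i j r, role i -> role j -> i <> j ->
      ~ (List.In r (Rrole i) /\ List.In r (Rrole j))) /\
  (forall r, R_orig Renv Rrole r ->
     Forall wf_rule_fact (prem r ++ lab r ++ concl r)) /\
  (forall r, R_orig Renv Rrole r ->
     Forall (fun f => sclass FS (fst f) = CAct) (lab r) \/ fresh_rule r) /\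
  (forall i r, role i -> List.In r (Rrole i) ->
     Forall (fun f => sclass FS (fst f) = CAct) (lab r)) /\
  (forall r, List.In r Renv ->
     Forall (fun f => sclass FS (fst f) = CEnv) (prem r ++ concl r)) /\
  (exists r, List.In r Renv /\ fresh_rule r) /\
  md_rules_in Renv /\
  (forall r j f, R_orig Renv Rrole r -> role j -> List.In f (concl r) ->
     fst f = SetupS FS j ->
     List.In r Renv /\ concl r = [f] /\ lab r = []) /\
  (forall i, role i ->
     (forall r, List.In r (Rrole i) ->
        Forall (fun f => sclass FS (fst f) = CState i \/ isIn FS (fst f)) (prem r) /\
        Forall (fun f => sclass FS (fst f) = CState i \/ isOut FS (fst f)) (concl r) /\
        (exists f, List.In f (concl r) /\ sclass FS (fst f) = CState i)) /\
     exists k, 1 <= k /\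
       forall r, List.In r (Rrole i) ->
         exists (rid : var) (p : list (term Fn)),
           vsort rid = SFresh /\ length p = k /\ hd_error p = Some (TVar rid) /\
           forall f, List.In f (prem r ++ concl r) ->
             (sclass FS (fst f) = CState i \/ fst f = SetupS FS i) ->
             exists rest, snd f = p ++ rest).

Inductive xsym := XOrig (F : S) | XBuf (F : S) (i : nat).

Definition xarity (X : xsym) : nat :=
  match X with XOrig F => sarity FS F | XBuf F _ => Datatypes.S (sarity FS F) end.
Definition xlin (X : xsym) : bool :=
  match X with XOrig F => slin FS F | XBuf F _ => slin FS F end.

Notation xrl := (rule xsym Fn).

Definition lift_fact (f : fact S Fn) : fact xsym Fn := (XOrig (fst f), snd f).
Definition lift_rule (r : rl) : xrl :=
  Rule (map lift_fact (prem r)) (map lift_fact (lab r)) (map lift_fact (concl r)).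

Definition buffered (F : S) : Prop :=
  (isIn FS F /\ ~ is_setup_sym F) \/ isOut FS F.

Definition thread_id (i : nat) (r : rl) (rid : term Fn) : Prop :=
  exists F args, List.In (F, rid :: args) (concl r) /\ sclass FS F = CState i.

Definition xfact (i : nat) (rid : term Fn) (f : fact S Fn) (g : fact xsym Fn) : Prop :=
  (buffered (fst f) /\ g = (XBuf (fst f) i, rid :: snd f)) \/
  (~ buffered (fst f) /\ g = lift_fact f).

Definition xrule (i : nat) (r : rl) (r' : xrl) : Prop :=
  exists rid, thread_id i r rid /\
    Forall2 (xfact i rid) (prem r) (prem r') /\
    Forall2 (xfact i rid) (lab r) (lab r') /\
    Forall2 (xfact i rid) (concl r) (concl r').

Definition io_vars (k : nat) : list var := map (fun j => Var SMsg j) (seq 0 k).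
Definition io_rid : var := Var SFresh 0.

Definition io_in_rule (i : nat) (F : S) : xrl :=
  let xs := map TVar (io_vars (sarity FS F)) in
  Rule [(XOrig F, xs)] [] [(XBuf F i, TVar io_rid :: xs)].
Definition io_out_rule (i : nat) (G : S) : xrl :=
  let xs := map TVar (io_vars (sarity FS G)) in
  Rule [(XBuf G i, TVar io_rid :: xs)] [] [(XOrig G, xs)].

Definition is_setup_rule (r : rl) : Prop :=
  exists f, List.In f (concl r) /\ is_setup_sym (fst f).

Definition R_env_minus (Renv : list rl) (r : xrl) : Prop :=
  exists r0, List.In r0 Renv /\ ~ is_setup_rule r0 /\ r = lift_rule r0.

Definition R_io (Renv : list rl) (r : xrl) : Prop :=
  (exists i F, role i /\ isIn FS F /\ ~ is_setup_sym F /\ r = io_in_rule i F) \/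
  (exists i G, role i /\ isOut FS G /\ r = io_out_rule i G) \/
  (exists r0, List.In r0 Renv /\ is_setup_rule r0 /\ r = lift_rule r0).

Definition R_role' (Rrole : nat -> list rl) (i : nat) (r : xrl) : Prop :=
  exists r0, List.In r0 (Rrole i) /\ xrule i r0 r.

Definition R_intf (Renv : list rl) (Rrole : nat -> list rl) (r : xrl) : Prop :=
  R_env_minus Renv r \/ R_io Renv r \/ exists i, role i /\ R_role' Rrole i r.

End Protocol.

(* Main.v *)
Require Import Defs.
From Stdlib Require Import List Permutation.
Import ListNotations.

Lemma perm_filter {A} (f : A -> bool) l l' : Permutation l l' -> Permutation (filter f l) (filter f l').
Proof.
  induction 1; simpl; try constructor; auto.
  - destruct (f x); auto.
  - destruct (f x), (f y); try constructor; auto.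
  - eapply perm_trans; eauto.
Qed.

Lemma filter_filter_id {A} (f : A -> bool) l : filter f (filter f l) = filter f l.
Proof. induction l; simpl; auto. destruct (f a) eqn:H; simpl; try rewrite H; congruence. Qed.

Lemma perm_split_filter {A} (f : A -> bool) l :
  Permutation l (filter f l ++ filter (fun x => negb (f x)) l).
Proof.
  induction l; simpl; auto. destruct (f a); simpl; auto.
  apply Permutation_cons_app; auto.
Qed.

Lemma filter_neg_nil {A} (f : A -> bool) l : filter f (filter (fun x => negb (f x)) l) = [].
Proof. induction l; simpl; auto. destruct (f a) eqn:H; simpl; auto. rewrite H; auto. Qed.

Lemma filter_all {A} (f : A -> bool) l : (forall x, In x l -> f x = true) -> filter f l = l.
Proof. induction l; simpl; intros H; auto. rewrite H by auto. f_equal; auto. Qed.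

Lemma F2_sym {A} (R : A -> A -> Prop) : (forall x y, R x y -> R y x) ->
  forall l m, Forall2 R l m -> Forall2 R m l.
Proof. induction 2; constructor; auto. Qed.

Lemma F2_trans {A} (R : A -> A -> Prop) : (forall x y z, R x y -> R y z -> R x z) ->
  forall l m k, Forall2 R l m -> Forall2 R m k -> Forall2 R l k.
Proof. intros HT l m k H; revert k; induction H; intros k H'; inversion H'; subst; constructor; eauto. Qed.

Lemma F2_refl {A} (R : A -> A -> Prop) : (forall x, R x x) -> forall l, Forall2 R l l.
Proof. induction l; constructor; auto. Qed.

Section Sim.
Variables (Sg : funsig) (FS : factsig) (n : nat)
  (E : term (fsym Sg) -> term (fsym Sg) -> Prop)
  (Renv : list (rule (symb FS) (fsym Sg)))
  (Rrole : nat -> list (rule (symb FS) (fsym Sg))).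
Notation Fn := (fsym Sg).
Notation Sy := (symb FS).
Notation ofact := (fact Sy Fn).
Notation xfct := (fact (xsym FS) Fn).
Notation fE := (@fact_eqE Sy Fn E).
Notation xE := (@fact_eqE (xsym FS) Fn E).

Definition olin (f : ofact) : bool := slin FS (fst f).
Definition xl (g : xfct) : bool := xlin (fst g).
Definition nl (f : ofact) : bool := negb (olin f).

Definition proj (g : xfct) : ofact :=
  match fst g with XOrig _ F => (F, snd g) | XBuf _ F _ => (F, tl (snd g)) end.

Lemma fE_refl f : fE f f.
Proof. split; auto. apply F2_refl. intros; constructor. Qed.
Lemma fE_sym f g : fE f g -> fE g f.
Proof. intros [H1 H2]; split; auto. eapply F2_sym; eauto. intros; apply eqE_sym; auto. Qed.
Lemma fE_trans f g h : fE f g -> fE g h -> fE f h.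
Proof. intros [H1 H2] [H3 H4]; split; [congruence|]. eapply F2_trans; eauto. intros; eapply eqE_trans; eauto. Qed.
Lemma fE_lin f g : fE f g -> olin f = olin g.
Proof. intros [H _]; unfold olin; congruence. Qed.
Arguments fE_lin {f g}.

Lemma lin_proj g : olin (proj g) = xl g.
Proof. destruct g as [[F|F i] a]; reflexivity. Qed.

Lemma filter_map_proj X : filter olin (map proj X) = map proj (filter xl X).
Proof. rewrite filter_map_swap. apply f_equal. apply filter_ext. apply lin_proj. Qed.

Lemma perm_proj X A B : Permutation X (A ++ B) ->
  Permutation (filter olin (map proj X)) (filter olin (map proj A) ++ filter olin (map proj B)).
Proof.
  intros H. rewrite !filter_map_proj, <- map_app, <- filter_app.
  apply Permutation_map, perm_filter; auto.
Qed.
Arguments perm_proj {X A B}.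

Lemma msg_proj g : msg_fact (@xarity FS) g -> msg_fact (Sg:=Sg) (sarity FS) (proj g).
Proof.
  destruct g as [[F|F i] args]; unfold msg_fact, proj; simpl; auto.
  intros [H1 H2]. destruct args; simpl in *; [discriminate|]. split; [congruence|].
  inversion H2; auto.
Qed.

Definition Rel (X : list xfct) (St : list ofact) : Prop :=
  Forall (msg_fact (Sg:=Sg) (sarity FS)) St /\
  (exists L, Forall2 fE (filter olin (map proj X)) L /\ Permutation L (filter olin St)) /\
  (forall f, In f (map proj X) -> olin f = false -> exists g, In g St /\ fE f g).

Lemma split_lin X St l' rest : Rel X St -> Permutation X (filter xl l' ++ rest) ->
  exists L1 L2, Forall2 fE (filter olin (map proj l')) L1 /\
    Forall2 fE (filter olin (map proj rest)) L2 /\ Permutation (L1 ++ L2) (filter olin St).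
Proof.
  intros [_ [[L [HL HP]] _]] HX.
  apply perm_proj in HX.
  rewrite (filter_map_proj (filter xl l')), filter_filter_id, <- filter_map_proj in HX.
  destruct (Permutation_Forall2 HX HL) as [L' [HP' HF]].
  destruct (Forall2_app_inv_l _ _ HF) as (L1 & L2 & H1 & H2 & ->).
  exists L1, L2; repeat split; auto.
  eapply perm_trans; [apply Permutation_sym; eauto | auto].
Qed.
Arguments split_lin {X St} l' {rest}.

Lemma build St A L1 : Forall2 fE (filter olin A) L1 ->
  (forall f, In f A -> olin f = false -> exists g, In g St /\ fE f g) ->
  exists B, Forall2 fE A B /\ filter olin B = L1 /\
    (forall g, In g B -> In g L1 \/ (In g St /\ olin g = false)).
Proof.
  revert L1; induction A as [|a A IH]; intros L1 H Hp; simpl in H.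
  - inversion H; subst. exists []; simpl; repeat split; auto; tauto.
  - destruct (olin a) eqn:Ha.
    + inversion H as [|? y ? l' H3 H4]; subst.
      destruct (IH l') as (B & HB & HfB & HiB); auto.
      { intros; apply Hp; simpl; auto. }
      exists (y :: B); repeat split; auto.
      * simpl. rewrite <- (fE_lin H3), Ha, HfB; auto.
      * intros g [<-|Hg]; simpl; auto. destruct (HiB g Hg); simpl; auto.
    + destruct (Hp a) as (g & Hg & Hag); simpl; auto.
      destruct (IH L1) as (B & HB & HfB & HiB); auto.
      { intros; apply Hp; simpl; auto. }
      exists (g :: B); repeat split; auto.
      * simpl. rewrite <- (fE_lin Hag), Ha; auto.
      * intros g' [<-|Hg']; simpl; auto. right; split; auto. rewrite <- (fE_lin Hag); auto.
Qed.

Arguments build St A {L1}.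

Lemma sim_step (R : rule Sy Fn -> Prop) r0 th X St l' a' r' rest X' :
 Rel X St -> R r0 -> ground_inst th ->
 Forall2 fE (map proj l') (map (subst_fact th) (prem r0)) ->
 Forall2 fE (map proj a') (map (subst_fact th) (lab r0)) ->
 Forall2 fE (map proj r') (map (subst_fact th) (concl r0)) ->
 Forall (msg_fact (@xarity FS)) (l' ++ a' ++ r') ->
 (forall f, In f l' -> xlin (fst f) = false -> In f X) ->
 Permutation X (filter (fun f => xlin (fst f)) l' ++ rest) -> Permutation X' (rest ++ r') ->
 exists St', step (sarity FS) (slin FS) E R St (map proj a') St' /\ Rel X' St'.
Proof.
  intros HRel HR Hth Hl Ha Hr Hmsg Hlp HP1 HP2.
  destruct (split_lin l' HRel HP1) as (L1 & L2 & HL1 & HL2 & HP).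
  destruct HRel as [HmS [_ Hpers]].
  assert (HL1S : forall g, In g L1 -> In g St /\ olin g = true).
  { intros g Hg. apply (filter_In olin). eapply Permutation_in; eauto. apply in_or_app; auto. }
  assert (HL2S : forall g, In g L2 -> In g St /\ olin g = true).
  { intros g Hg. apply (filter_In olin). eapply Permutation_in; eauto. apply in_or_app; auto. }
  destruct (build St (map proj l') HL1) as (B & HB & HfB & HiB).
  { intros f Hf Hlf. apply in_map_iff in Hf as [g [<- Hg]]. apply Hpers; auto.
    apply in_map. apply Hlp; auto. change (xl g = false). rewrite <- lin_proj; auto. }
  apply Forall_app in Hmsg as [Hml Hmsg]. apply Forall_app in Hmsg as [Hma Hmr].
  exists ((L2 ++ filter nl St) ++ map proj r'). split.
  - unfold step. exists r0. exists th. exists B. exists (map proj r'). refine (conj HR (conj Hth (conj _ (conj Ha (conj Hr (conj _ (conj _ _))))))).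
    + eapply F2_trans; [exact fE_trans| |exact Hl]. eapply F2_sym; [exact fE_sym|exact HB].
    + rewrite !Forall_app; repeat split.
      * apply Forall_forall; intros g Hg. destruct (HiB g Hg) as [H|[H _]].
        -- eapply Forall_forall; [exact HmS|]. apply HL1S; auto.
        -- eapply Forall_forall; [exact HmS|]. auto.
      * apply Forall_map. eapply Forall_impl; [|exact Hma]. apply msg_proj.
      * apply Forall_map. eapply Forall_impl; [|exact Hmr]. apply msg_proj.
    + intros f Hf Hlf. destruct (HiB f Hf) as [H|[H _]]; auto.
      apply HL1S in H as [_ H]. unfold olin in H; congruence.
    + exists (L2 ++ filter nl St). split; [|apply Permutation_refl].
      change (Permutation St (filter olin B ++ L2 ++ filter nl St)). rewrite HfB.
      eapply perm_trans; [apply (perm_split_filter olin)|].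
      rewrite app_assoc. apply Permutation_app_tail. apply Permutation_sym; auto.
  - split; [|split].
    + rewrite !Forall_app; repeat split.
      * apply Forall_forall; intros g Hg. eapply Forall_forall; [exact HmS|]. apply HL2S; auto.
      * apply Forall_forall; intros g Hg. eapply Forall_forall; [exact HmS|].
        apply filter_In in Hg; tauto.
      * apply Forall_map. eapply Forall_impl; [|exact Hmr]. apply msg_proj.
    + assert (HF : Forall2 fE (filter olin (map proj rest) ++ filter olin (map proj r'))
                               (L2 ++ filter olin (map proj r'))).
      { apply Forall2_app; auto. apply F2_refl, fE_refl. }
      destruct (Permutation_Forall2 (Permutation_sym (perm_proj HP2)) HF) as [L' [HP' HF']].
      exists L'; split; auto.
      rewrite !filter_app, filter_all, filter_neg_nil, app_nil_r.
      * apply Permutation_sym; auto.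
      * intros; apply HL2S; auto.
    + intros f Hf Hlf. apply in_map_iff in Hf as [g [<- Hg]].
      apply (Permutation_in _ HP2) in Hg. apply in_app_or in Hg as [Hg|Hg].
      * destruct (Hpers (proj g)) as (h & Hh & Hgh); auto.
        { apply in_map. eapply Permutation_in; [apply Permutation_sym; eauto|].
          apply in_or_app; auto. }
        exists h; split; auto. apply in_or_app; left; apply in_or_app; right.
        apply filter_In; split; auto. unfold nl. rewrite <- (fE_lin Hgh), Hlf; auto.
      * exists (proj g); split; [|apply fE_refl]. apply in_or_app; right; apply in_map; auto.
Qed.

Lemma sim_stutter X St f g rest X' : Rel X St -> fE (proj f) (proj g) ->
  (xlin (fst f) = false -> In f X) ->
  Permutation X (filter (fun f => xlin (fst f)) [f] ++ rest) -> Permutation X' (rest ++ [g]) ->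
  Rel X' St.
Proof.
  intros HRel Hfg Hfp HP1 HP2.
  destruct (split_lin [f] HRel HP1) as (L1 & L2 & HL1 & HL2 & HP).
  destruct HRel as [HmS [_ Hpers]].
  split; [auto|split].
  - assert (HF : Forall2 fE (filter olin (map proj rest) ++ filter olin (map proj [g])) (L2 ++ L1)).
    { apply Forall2_app; auto. simpl in *. rewrite <- (fE_lin Hfg).
      destruct (olin (proj f)); inversion HL1; subst; constructor; auto.
      eapply fE_trans; eauto. apply fE_sym; auto. }
    destruct (Permutation_Forall2 (Permutation_sym (perm_proj HP2)) HF) as [L' [HP' HF']].
    exists L'; split; auto. eapply perm_trans; [apply Permutation_sym; eauto|].
    eapply perm_trans; [apply Permutation_app_comm|]; auto.
  - intros f' Hf Hlf. apply in_map_iff in Hf as [g' [<- Hg]].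
    apply (Permutation_in _ HP2) in Hg. apply in_app_or in Hg as [Hg|[<-|[]]].
    + apply Hpers; auto. apply in_map. eapply Permutation_in; [apply Permutation_sym; eauto|].
      apply in_or_app; auto.
    + destruct (Hpers (proj f)) as (h & Hh & Hfh).
      * apply in_map, Hfp. change (xl f = false). rewrite <- lin_proj, (fE_lin Hfg); auto.
      * rewrite (fE_lin Hfg); auto.
      * exists h; split; auto. eapply fE_trans; eauto. apply fE_sym; auto.
Qed.


Definition corr (f : ofact) (g : xfct) : Prop :=
  g = lift_fact Sg FS f \/ exists i rid, g = (XBuf FS (fst f) i, rid :: snd f).

Lemma corr_sub th f g x : corr f g -> xE x (subst_fact th g) -> fE (proj x) (subst_fact th f).
Proof.
  intros [->|(i&rid&->)] [H1 H2]; destruct x as [X args]; simpl in *; subst X; unfold proj; simpl.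
  - split; simpl; auto.
  - inversion H2; subst; split; simpl; auto.
Qed.

Lemma corr_F2 th l' P0 P' : Forall2 corr P0 P' -> Forall2 xE l' (map (subst_fact th) P') ->
  Forall2 fE (map proj l') (map (subst_fact th) P0).
Proof.
  intros H; revert l'; induction H; intros l'' H'; simpl in H'; inversion H'; subst; simpl;
    constructor; eauto using corr_sub.
Qed.

Lemma corr_lift L : Forall2 corr L (map (lift_fact Sg FS) L).
Proof. induction L; simpl; constructor; auto; left; auto. Qed.

Lemma lab_orig th L a' : Forall2 xE a' (map (subst_fact th) (map (lift_fact Sg FS) L)) ->
  a' = map (lift_fact Sg FS) (map proj a').
Proof.
  revert a'; induction L; intros a' H; simpl in H; inversion H as [|x ? l ? Hx Hl]; subst; simpl; auto.
  f_equal; auto. destruct x as [X args]; destruct Hx as [H3 _]; simpl in H3; subst; reflexivity.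
Qed.

Lemma xfact_corr i rid f g : xfact Sg n i rid f g -> corr f g.
Proof. intros [[_ ->]|[_ ->]]; [right; eauto|left; auto]. Qed.

Lemma xfact_F2 i rid L L' : Forall2 (xfact Sg n i rid) L L' -> Forall2 corr L L'.
Proof. induction 1; constructor; eauto using xfact_corr. Qed.

Lemma xfact_lab i rid L L' :
  (forall F, isIn FS F -> sclass FS F = CEnv) -> (forall F, isOut FS F -> sclass FS F = CEnv) ->
  Forall (fun f => sclass FS (fst f) = CAct) L -> Forall2 (xfact Sg n i rid) L L' ->
  L' = map (lift_fact Sg FS) L.
Proof.
  intros Hin Hout HL H; induction H; simpl; auto. inversion HL; subst.
  f_equal; auto. destruct H as [[Hb _]|[_ ->]]; auto.
  exfalso. destruct Hb as [[Hb _]|Hb]; [apply Hin in Hb|apply Hout in Hb]; congruence.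
Qed.

Lemma step_sim X St a X' : format_assumptions Sg FS n Renv Rrole -> Rel X St ->
  step (@xarity FS) (@xlin FS) E (R_intf Sg n Renv Rrole) X a X' ->
  (a = [] /\ Rel X' St) \/
  (exists St', step (sarity FS) (slin FS) E (R_orig Sg FS n Renv Rrole) St (map proj a) St' /\
     Rel X' St' /\ a = map (lift_fact Sg FS) (map proj a)).
Proof.
  intros HF HRel (ru & th & l' & r' & HR & Hth & Hl & Ha & Hr & Hmsg & Hpers & rest & HP1 & HP2).
  assert (Hlift : forall r0, R_orig Sg FS n Renv Rrole r0 -> ru = lift_rule Sg FS r0 ->
    exists St', step (sarity FS) (slin FS) E (R_orig Sg FS n Renv Rrole) St (map proj a) St' /\
     Rel X' St' /\ a = map (lift_fact Sg FS) (map proj a)).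
  { intros r0 Hr0 ->. cbn [prem lab concl lift_rule] in Hl, Ha, Hr.
    pose proof (lab_orig _ _ _ Ha) as Ea.
    destruct (sim_step _ r0 th X St l' a r' rest X' HRel Hr0 Hth
      (corr_F2 _ _ _ _ (corr_lift _) Hl) (corr_F2 _ _ _ _ (corr_lift _) Ha)
      (corr_F2 _ _ _ _ (corr_lift _) Hr) Hmsg Hpers HP1 HP2) as (St' & H1 & H2).
    exists St'; auto. }
  destruct HR as [(r0 & Hin & _ & ->) | [Hio | (i & Hi & r0 & Hin & rid & _ & Hp & Hlb & Hc)]].
  - right. apply (Hlift r0); [left; auto | reflexivity].
  - destruct Hio as [(i & F & Hi & HinF & Hns & ->) | [(i & G & Hi & HoG & ->) | (r0 & Hin & _ & ->)]].
    + left. unfold io_in_rule in Hl, Ha, Hr. cbn [prem lab concl map] in Hl, Ha, Hr.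
      inversion Ha; subst a. split; auto.
      inversion Hl as [|f ? ? ? Hf Hnil]; subst. inversion Hnil; subst.
      inversion Hr as [|g ? ? ? Hg Hnil2]; subst. inversion Hnil2; subst.
      apply (sim_stutter X St f g rest X' HRel).
      * eapply fE_trans.
        -- eapply (corr_sub th (F, map TVar (io_vars (sarity FS F)))); [left; reflexivity| exact Hf].
        -- apply fE_sym. eapply (corr_sub th (F, map TVar (io_vars (sarity FS F)))); [|exact Hg].
           right; exists i, (TVar io_rid); reflexivity.
      * intros H; apply Hpers; simpl; auto.
      * exact HP1.
      * exact HP2.
    + left. unfold io_out_rule in Hl, Ha, Hr. cbn [prem lab concl map] in Hl, Ha, Hr.
      inversion Ha; subst a. split; auto.
      inversion Hl as [|f ? ? ? Hf Hnil]; subst. inversion Hnil; subst.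
      inversion Hr as [|g ? ? ? Hg Hnil2]; subst. inversion Hnil2; subst.
      apply (sim_stutter X St f g rest X' HRel).
      * eapply fE_trans.
        -- eapply (corr_sub th (G, map TVar (io_vars (sarity FS G)))); [|exact Hf].
           right; exists i, (TVar io_rid); reflexivity.
        -- apply fE_sym. eapply (corr_sub th (G, map TVar (io_vars (sarity FS G)))); [left; reflexivity| exact Hg].
      * intros H; apply Hpers; simpl; auto.
      * exact HP1.
      * exact HP2.
    + right. apply (Hlift r0); [left; auto | reflexivity].
  - right.
    destruct HF as (_&Hin'&Hout'&_&_&_&_&_&_&_&_&_&_&_&_&_&_&_&_&_&_&_&_&_&Hlab&_).
    assert (El : lab ru = map (lift_fact Sg FS) (lab r0)).
    { eapply xfact_lab; eauto. }
    rewrite El in Ha. pose proof (lab_orig _ _ _ Ha) as Ea.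
    destruct (sim_step (R_orig Sg FS n Renv Rrole) r0 th X St l' a r' rest X' HRel (or_intror (ex_intro _ i (conj Hi Hin))) Hth
      (corr_F2 _ _ _ _ (xfact_F2 _ _ _ _ Hp) Hl) (corr_F2 _ _ _ _ (corr_lift _) Ha)
      (corr_F2 _ _ _ _ (xfact_F2 _ _ _ _ Hc) Hr) Hmsg Hpers HP1 HP2) as (St' & H1 & H2).
    exists St'; auto.
Qed.

Lemma reach_sim tr X : format_assumptions Sg FS n Renv Rrole ->
  reach (@xarity FS) (@xlin FS) E (R_intf Sg n Renv Rrole) tr X ->
  exists tr0 St, reach (sarity FS) (slin FS) E (R_orig Sg FS n Renv Rrole) tr0 St /\ Rel X St /\
    Forall2 (fun a b => a = map (lift_fact Sg FS) b) (filter (@nonempty _) tr) (filter (@nonempty _) tr0).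
Proof.
  intros HF; induction 1 as [|tr St a St' Hr IH Hs].
  - exists [], []; split; [constructor|]. split; [|constructor].
    split; [constructor|]. split; [exists []; simpl; split; constructor|]. simpl; tauto.
  - destruct IH as (tr0 & S0 & H0 & HR & HT).
    destruct (step_sim _ _ _ _ HF HR Hs) as [[-> HR']|(S1 & H1 & HR' & Ea)].
    + exists tr0, S0; split; [auto|split; [auto|]]. rewrite filter_app; simpl; rewrite app_nil_r; auto.
    + exists (tr0 ++ [map proj a]), S1; split; [|split; [auto|]].
      * econstructor; eauto.
      * rewrite !filter_app. apply Forall2_app; auto.
        destruct a; simpl; constructor; auto.
Qed.

End Sim.


Theorem lemma1 (Sg : funsig) (FS : factsig) (n : nat)
  (E : term (fsym Sg) -> term (fsym Sg) -> Prop)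
  (Renv : list (rule (symb FS) (fsym Sg)))
  (Rrole : nat -> list (rule (symb FS) (fsym Sg))) :
  @format_assumptions Sg FS n Renv Rrole ->
  forall t, Tr' (@xarity FS) (@xlin FS) E (@R_intf Sg FS n Renv Rrole) t ->
  exists t0, Tr' (sarity FS) (slin FS) E (@R_orig Sg FS n Renv Rrole) t0 /\
    Forall2 (fun a b => Permutation a (map (@lift_fact Sg FS) b)) t t0.
Proof.
  intros HF t (tr & (X & Hr) & ->).
  destruct (reach_sim _ _ _ _ _ _ _ _ HF Hr) as (tr0 & St & H0 & _ & HT).
  exists (filter (@nonempty _) tr0). split.
  - exists tr0; split; [exists St; auto | reflexivity].
  - eapply Forall2_impl; [|exact HT]. intros a b ->; apply Permutation_refl.
Qed.
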